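(* Let $\rho$ be a primitive $k$th root of unity, $0\le a\le k-1$, $L\in\mathbb Z_{\ge1}$, $\delta>0$, $C>0$. For all $N\ge1$ and $z$ with $\mathrm{Re}(z)\le-\delta$, $|z|\le C$, $$-\chi_a(-z,N)=\sum_{\ell=0}^{L}\frac{(-1)^\ell}{\ell!}\Big(\frac{kz}{N}\Big)^{\ell-1}B_\ell(a/k)\,\mathrm{Li}_{2-\ell}(\rho^{-a}e^{z})+O\Big(\frac1{N^L}\Big),$$ with implied constant depending only on $L,k,\delta,C$.
   Context: For $\mathrm{Re}(w)>0$, $\chi_a(w,N):=\sum_{r\ge1}\frac{\rho^{-ra}}{r}\frac{e^{-rw}e^{raw/N}}{e^{krw/N}-1}$. Bernoulli polynomials: $ze^{\lambda z}/(e^z-1)=\sum B_n(\lambda)z^n/n!$. Polylogarithms $\mathrm{Li}_s(u)=\sum_{n\ge1}u^n/n^s$ for $|u|<1$. *)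

(* Defs.v *)
From Stdlib Require Import Reals Lra List Arith ClassicalEpsilon.
Import ListNotations.
Open Scope R_scope.

Definition Cplx : Type := (R * R)%type.
Definition Re (z : Cplx) : R := fst z.
Definition Im (z : Cplx) : R := snd z.
Definition RtoC (x : R) : Cplx := (x, 0).
Definition C0 : Cplx := (0, 0).
Definition C1 : Cplx := (1, 0).
Definition Cadd (x y : Cplx) : Cplx := (Re x + Re y, Im x + Im y).
Definition Copp (x : Cplx) : Cplx := (- Re x, - Im x).
Definition Csub (x y : Cplx) : Cplx := Cadd x (Copp y).
Definition Cmul (x y : Cplx) : Cplx :=
  (Re x * Re y - Im x * Im y, Re x * Im y + Im x * Re y).
Definition Cinv (x : Cplx) : Cplx :=
  (Re x / (Re x ^ 2 + Im x ^ 2), - Im x / (Re x ^ 2 + Im x ^ 2)).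
Definition Cdiv (x y : Cplx) : Cplx := Cmul x (Cinv y).
Definition Cmod (x : Cplx) : R := sqrt (Re x ^ 2 + Im x ^ 2).
Definition Cexp (z : Cplx) : Cplx := (exp (Re z) * cos (Im z), exp (Re z) * sin (Im z)).
Fixpoint Cpow (x : Cplx) (n : nat) : Cplx :=
  match n with O => C1 | S m => Cmul x (Cpow x m) end.
Definition Cpowz (x : Cplx) (n : Z) : Cplx :=
  match n with
  | Z0 => C1
  | Zpos p => Cpow x (Pos.to_nat p)
  | Zneg p => Cinv (Cpow x (Pos.to_nat p))
  end.

Fixpoint Cpartial (f : nat -> Cplx) (n : nat) : Cplx :=
  match n with O => C0 | S m => Cadd (Cpartial f m) (f m) end.
Definition has_sum (f : nat -> Cplx) (s : Cplx) : Prop :=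
  Un_cv (fun n => Cmod (Csub (Cpartial f n) s)) 0.
(** the sum of a convergent series (an arbitrary value if divergent) *)
Definition Csum (f : nat -> Cplx) : Cplx := epsilon (inhabits C0) (has_sum f).


Definition primitive_root (k : nat) (rho : Cplx) : Prop :=
  Cpow rho k = C1 /\ forall j : nat, (0 < j < k)%nat -> Cpow rho j <> C1.

(** * Bernoulli numbers and polynomials
   B_0 = 1, sum_{j=0}^{n} C(n+1,j) B_j = 0 for n >= 1 (so B_1 = -1/2),
   and B_n(x) = sum_j C(n,j) B_j x^(n-j); these are the coefficients of
   z e^(x z)/(e^z - 1) = sum B_n(x) z^n / n!. *)
Fixpoint bern_aux (n : nat) : list R :=
  match n with
  | O => [1]
  | S m =>
      let l := bern_aux m in
      l ++ [ - / INR (S n) *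
             fold_right Rplus 0 (map (fun j => Binomial.C (S n) j * nth j l 0) (seq 0 n)) ]
  end.
Definition bernoulli (n : nat) : R := nth n (bern_aux n) 0.
Definition bernpoly (n : nat) (x : R) : R :=
  fold_right Rplus 0
    (map (fun j => Binomial.C n j * bernoulli j * x ^ (n - j)) (seq 0 (S n))).

Definition Li (s : Z) (u : Cplx) : Cplx :=
  Csum (fun i => Cmul (Cpow u (S i)) (RtoC (powerRZ (INR (S i)) (- s)))).

Definition chi (k : nat) (rho : Cplx) (a : nat) (w : Cplx) (N : nat) : Cplx :=
  Csum (fun i =>
    let r := INR (S i) in
    Cdiv (Cmul (Cmul (Cpow (Cinv rho) (S i * a)) (RtoC (/ r)))
               (Cmul (Cexp (Cmul (RtoC (- r)) w))
                     (Cexp (Cmul (RtoC (r * INR a / INR N)) w))))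
         (Csub (Cexp (Cmul (RtoC (INR k * r / INR N)) w)) C1)).

Definition chi_expansion (k : nat) (rho : Cplx) (a : nat) (z : Cplx) (N L : nat) : Cplx :=
  Cpartial (fun l =>
    Cmul (Cmul (RtoC ((-1) ^ l / INR (Factorial.fact l) * bernpoly l (INR a / INR k)))
               (Cpowz (Cmul (RtoC (INR k / INR N)) z) (Z.of_nat l - 1)))
         (Li (2 - Z.of_nat l) (Cmul (Cpow (Cinv rho) a) (Cexp z)))) (S L).

(* Main.v *)
From Stdlib Require Import Reals Lra Lia ClassicalEpsilon FunctionalExtensionality List.
Require Import Defs.
From Coquelicot Require Import Coquelicot.
Open Scope R_scope.
Notation fact := Factorial.fact.
Ltac toR := match goal with |- @eq _ ?a ?b => change (@eq R a b) end.
Ltac toC := match goal with |- @eq _ ?a ?b => change (@eq Complex.C a b) end.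

Lemma Cadd_E x y : Cadd x y = Cplus x y. Proof. reflexivity. Qed.
Lemma Cmul_E x y : Cmul x y = Cmult x y. Proof. reflexivity. Qed.
Lemma Copp_E x : Defs.Copp x = Complex.Copp x. Proof. reflexivity. Qed.
Lemma Csub_E x y : Csub x y = Cminus x y. Proof. reflexivity. Qed.
Lemma Cinv_E x : Defs.Cinv x = Complex.Cinv x. Proof. reflexivity. Qed.
Lemma Cdiv_E x y : Defs.Cdiv x y = Complex.Cdiv x y. Proof. reflexivity. Qed.
Lemma Cmod_E x : Defs.Cmod x = Complex.Cmod x. Proof. reflexivity. Qed.
Lemma RtoC_E x : Defs.RtoC x = Complex.RtoC x. Proof. reflexivity. Qed.
Lemma C0_E : C0 = RtoC 0. Proof. reflexivity. Qed.
Lemma C1_E : C1 = RtoC 1. Proof. reflexivity. Qed.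
Lemma Cpow_E x n : Defs.Cpow x n = Complex.Cpow x n.
Proof. induction n; simpl; [reflexivity| rewrite Cmul_E, IHn; reflexivity]. Qed.
Lemma Re_E x : Defs.Re x = fst x. Proof. reflexivity. Qed.
Lemma Im_E x : Defs.Im x = snd x. Proof. reflexivity. Qed.

Lemma Cexp_add x y : Cexp (Cplus x y) = Cmult (Cexp x) (Cexp y).
Proof.
  destruct x as [a b], y as [c d]; unfold Cexp, Cplus, Cmult, Defs.Re, Defs.Im; simpl.
  rewrite exp_plus, cos_plus, sin_plus. f_equal; ring.
Qed.

Lemma Cmod_Cexp x : Complex.Cmod (Cexp x) = exp (fst x).
Proof.
  destruct x as [a b]; unfold Cexp, Complex.Cmod, Defs.Re, Defs.Im; simpl.
  assert (H: exp a * cos b * (exp a * cos b * 1) + exp a * sin b * (exp a * sin b * 1) = exp a * exp a).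
  { pose proof (sin2_cos2 b). unfold Rsqr in H. nra. }
  rewrite H. apply sqrt_square. left; apply exp_pos.
Qed.

Lemma Cexp_0 : Cexp (RtoC 0) = RtoC 1.
Proof. unfold Cexp, RtoC, Defs.Re, Defs.Im; simpl. rewrite exp_0, cos_0, sin_0. f_equal; ring. Qed.

Lemma Cexp_nat n z : Cexp (Cmult (RtoC (INR n)) z) = Cpow (Cexp z) n.
Proof.
  induction n.
  - simpl. replace (Cmult (RtoC 0) z) with (RtoC 0). apply Cexp_0.
    apply injective_projections; simpl; ring.
  - replace (Cmult (RtoC (INR (S n))) z) with (Cplus z (Cmult (RtoC (INR n)) z)).
    + rewrite Cexp_add, IHn. reflexivity.
    + rewrite S_INR. apply injective_projections; simpl; ring.
Qed.

Lemma Cexp_neq0 x : Cexp x <> RtoC 0.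
Proof. intro H. pose proof (Cmod_Cexp x). rewrite H, Cmod_R, Rabs_R0 in H0. pose proof (exp_pos (fst x)). lra. Qed.

Lemma sumR_mult_l (a : R) (u : nat -> R) n : a * sum_n u n = sum_n (fun k => a * u k) n.
Proof. symmetry. apply (sum_n_mult_l (K:=R_Ring)). Qed.
Lemma sumR_mult_r (a : R) (u : nat -> R) n : sum_n u n * a = sum_n (fun k => u k * a) n.
Proof. symmetry. apply (sum_n_mult_r (K:=R_Ring)). Qed.
Lemma sumR_plus (u v : nat -> R) n : sum_n (fun k => u k + v k) n = sum_n u n + sum_n v n.
Proof. apply (sum_n_plus (G:=R_AbelianMonoid)). Qed.

Lemma sum_n_shift {G : AbelianMonoid} (g : nat -> G) n :
  sum_n g (S n) = plus (g O) (sum_n (fun a => g (S a)) n).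
Proof.
  induction n.
  - rewrite sum_Sn, !sum_O. reflexivity.
  - rewrite sum_Sn, IHn, sum_Sn. rewrite plus_assoc. reflexivity.
Qed.

Lemma sum_n_rev {G : AbelianMonoid} (g : nat -> G) s :
  sum_n g s = sum_n (fun a => g (s - a)%nat) s.
Proof.
  revert g; induction s; intros g.
  - rewrite !sum_O. reflexivity.
  - rewrite (sum_Sn (fun a => g (S s - a)%nat)). rewrite (sum_n_ext_loc (fun a => g (S s - a)%nat) (fun a => g (S (s - a)))).
    2:{ intros n Hn. f_equal. lia. }
    rewrite <- (IHs (fun a => g (S a))). rewrite sum_n_shift.
    replace (S s - S s)%nat with O by lia. apply plus_comm.
Qed.

Lemma sum_n_diag {G : AbelianMonoid} (h : nat -> nat -> G) M :
  sum_n (fun a => sum_n (fun b => h a b) (M - a)%nat) M =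
  sum_n (fun s => sum_n (fun a => h a (s - a)%nat) s) M.
Proof.
  induction M.
  - rewrite !sum_O. simpl. reflexivity.
  - rewrite sum_Sn. rewrite (sum_Sn (fun s => sum_n (fun a => h a (s - a)%nat) s)).
    rewrite <- IHM.
    rewrite (sum_n_ext_loc (fun a => sum_n (fun b => h a b) (S M - a)%nat)
                           (fun a => plus (sum_n (fun b => h a b) (M - a)%nat) (h a (S M - a)%nat))).
    2:{ intros n Hn. replace (S M - n)%nat with (S (M - n)) by lia. rewrite sum_Sn. reflexivity. }
    rewrite sum_n_plus. rewrite (sum_Sn (fun a => h a (S M - a)%nat)).
    replace (S M - S M)%nat with O by lia. rewrite sum_O.
    rewrite <- !plus_assoc. reflexivity.
Qed.

Lemma fold_seq_sum (f : nat -> R) m s :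
  fold_right Rplus 0 (map f (seq s (S m))) = sum_n (fun i => f (s + i)%nat) m.
Proof.
  revert s; induction m; intros s.
  - simpl. rewrite sum_O. rewrite Nat.add_0_r. ring.
  - change (seq s (S (S m))) with (s :: seq (S s) (S m)).
    change (fold_right Rplus 0 (map f (s :: seq (S s) (S m)))) with (f s + fold_right Rplus 0 (map f (seq (S s) (S m)))).
    rewrite IHm. rewrite sum_n_shift.
    rewrite Nat.add_0_r. unfold plus; simpl.
    f_equal. apply sum_n_ext. intros; f_equal; lia.
Qed.

Lemma bern_aux_len n : length (bern_aux n) = S n.
Proof. induction n; simpl; auto. rewrite length_app, IHn. simpl. lia. Qed.

Lemma bern_aux_prefix j n d : (j <= n)%nat -> nth j (bern_aux (d + n)) 0 = nth j (bern_aux n) 0.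
Proof.
  intros Hj. induction d; [reflexivity|].
  change (bern_aux (S d + n)) with (bern_aux (S (d + n))). simpl bern_aux.
  rewrite app_nth1; [exact IHd|]. rewrite bern_aux_len. lia.
Qed.

Lemma bern_aux_nth j n : (j <= n)%nat -> nth j (bern_aux n) 0 = bernoulli j.
Proof.
  intros H. unfold bernoulli. replace n with ((n - j) + j)%nat by lia.
  apply bern_aux_prefix. lia.
Qed.

Lemma bernoulli_S m : bernoulli (S m) =
  - / INR (S (S m)) * sum_n (fun j => Binomial.C (S (S m)) j * bernoulli j) m.
Proof.
  unfold bernoulli at 1.
  change (bern_aux (S m)) with (bern_aux m ++ ( - / INR (S (S m)) *
             fold_right Rplus 0 (map (fun j => Binomial.C (S (S m)) j * nth j (bern_aux m) 0) (seq 0 (S m))) :: nil)).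
  rewrite app_nth2; rewrite bern_aux_len; [|lia].
  rewrite Nat.sub_diag. cbn [nth]. f_equal.
  rewrite fold_seq_sum. apply sum_n_ext_loc. intros n Hn. simpl. rewrite bern_aux_nth; auto.
Qed.

Lemma binom_Sn_n n : Binomial.C (S n) n = INR (S n).
Proof.
  unfold Binomial.C. replace (S n - n)%nat with 1%nat by lia.
  change (Factorial.fact (S n)) with (S n * Factorial.fact n)%nat. rewrite mult_INR.
  pose proof (INR_fact_neq_0 n). change (INR (Factorial.fact 1)) with 1. field. auto.
Qed.

Definition kron (m : nat) : R := match m with O => 1 | S _ => 0 end.
Lemma bern_rec m : sum_n (fun j => Binomial.C (S m) j * bernoulli j) m = kron m.
Proof.
  destruct m.
  - rewrite sum_O. simpl. unfold bernoulli; simpl. rewrite C_n_0. ring.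
  - simpl kron. rewrite sum_Sn. rewrite binom_Sn_n, bernoulli_S.
    unfold plus; simpl.
    assert (INR (S (S m)) <> 0) by (apply not_0_INR; lia).
    field. auto.
Qed.

Lemma binom_prod n a b : (a + b <= n)%nat ->
  Binomial.C n (a + b) * Binomial.C (a + b) a = Binomial.C n a * Binomial.C (n - a) b.
Proof.
  intros H. unfold Binomial.C.
  replace (a + b - a)%nat with b by lia. replace (n - a - b)%nat with (n - (a + b))%nat by lia.
  pose proof (INR_fact_neq_0 n). pose proof (INR_fact_neq_0 a). pose proof (INR_fact_neq_0 b).
  pose proof (INR_fact_neq_0 (a+b)). pose proof (INR_fact_neq_0 (n-a)). pose proof (INR_fact_neq_0 (n-(a+b))).
  field. repeat split; auto.
Qed.

Lemma bernpoly_sum l x : bernpoly l x = sum_n (fun j => Binomial.C l j * bernoulli j * x ^ (l - j)) l.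
Proof. unfold bernpoly. rewrite fold_seq_sum. apply sum_n_ext. intros; reflexivity. Qed.

Lemma sum_n_zero_R (f : nat -> R) n : (forall i, (i <= n)%nat -> f i = 0) -> sum_n f n = 0.
Proof.
  intros H. rewrite (sum_n_ext_loc f (fun _ => 0)). rewrite sum_n_const. toR; ring. exact H.
Qed.

Lemma bernpoly_id s x :
  sum_n (fun l => Binomial.C (S s) l * bernpoly l x) s = INR (S s) * x ^ s.
Proof.
  rewrite (sum_n_ext_loc _ (fun l => sum_n (fun i => (fun a b => Binomial.C (S s) (a + b) * Binomial.C (a + b) a * bernoulli b * x ^ a) i (l - i)%nat) l)).
  2:{ intros l Hl. rewrite bernpoly_sum. rewrite sum_n_rev.
      rewrite sumR_mult_l. apply sum_n_ext_loc. intros i Hi.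
      replace (i + (l - i))%nat with l by lia. replace (l - (l - i))%nat with i by lia.
      rewrite <- pascal_step1 by lia. unfold mult; simpl. ring. }
  rewrite <- (sum_n_diag (G:=R_AbelianMonoid) (fun a b => Binomial.C (S s) (a + b) * Binomial.C (a + b) a * bernoulli b * x ^ a)).
  rewrite (sum_n_ext_loc _ (fun a => Binomial.C (S s) a * x ^ a * kron (s - a))).
  2:{ intros a Ha. rewrite <- (bern_rec (s - a)).
      rewrite sumR_mult_l. apply sum_n_ext_loc. intros b Hb.
      rewrite binom_prod by lia. replace (S s - a)%nat with (S (s - a)) by lia.
      unfold mult; simpl. ring. }
  destruct s.
  - rewrite sum_O. simpl. rewrite C_n_0. ring.
  - rewrite sum_Sn. rewrite sum_n_zero_R.
    2:{ intros i Hi. replace (S s - i)%nat with (S (s - i)) by lia. simpl kron. ring. }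
    rewrite Nat.sub_diag. simpl kron. rewrite binom_Sn_n. unfold plus; simpl. ring.
Qed.

Lemma bernpoly_div s x :
  sum_n (fun l => bernpoly l x / (INR (Factorial.fact l) * INR (Factorial.fact (S s - l)))) s = x ^ s / INR (Factorial.fact s).
Proof.
  assert (H := bernpoly_id s x).
  rewrite (sum_n_ext_loc _ (fun l => Binomial.C (S s) l * bernpoly l x * / INR (Factorial.fact (S s)))).
  2:{ intros l Hl. unfold Binomial.C. pose proof (INR_fact_neq_0 (S s)). pose proof (INR_fact_neq_0 l).
      pose proof (INR_fact_neq_0 (S s - l)). toR; field. auto. }
  rewrite <- sumR_mult_r.
  unfold Rdiv. rewrite H. change (Factorial.fact (S s)) with (S s * Factorial.fact s)%nat. rewrite mult_INR.
  pose proof (INR_fact_neq_0 s). assert (INR (S s) <> 0) by (apply not_0_INR; lia).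
  toR; field. auto.
Qed.

Lemma sumC_mult_l (a : C) (u : nat -> C) n : Cmult a (sum_n u n) = sum_n (fun k => Cmult a (u k)) n.
Proof. symmetry. apply (sum_n_mult_l (K:=C_Ring)). Qed.
Lemma sumC_mult_r (a : C) (u : nat -> C) n : Cmult (sum_n u n) a = sum_n (fun k => Cmult (u k) a) n.
Proof. symmetry. apply (sum_n_mult_r (K:=C_Ring)). Qed.
Lemma sumC_plus (u v : nat -> C) n : sum_n (fun k => Cplus (u k) (v k)) n = Cplus (sum_n u n) (sum_n v n).
Proof. apply (sum_n_plus (G:=C_AbelianMonoid)). Qed.

Lemma exp_le x y : x <= y -> exp x <= exp y.
Proof. intros [H|H]; [left; apply exp_increasing; auto| subst; right; reflexivity]. Qed.

Definition U (c y : Complex.C) (j : nat) (t : R) : R :=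
  fst (Cmult c (Cmult (Cpow y j) (Cexp (Cmult (RtoC t) y)))).

Lemma U_eq c y j t : U c y j t =
  fst (Cmult c (Cpow y j)) * (exp (t * fst y) * cos (t * snd y))
  - snd (Cmult c (Cpow y j)) * (exp (t * fst y) * sin (t * snd y)).
Proof.
  unfold U. rewrite Cmult_assoc. destruct (Cmult c (Cpow y j)) as [p q].
  destruct y as [a b]. unfold Cexp, Defs.Re, Defs.Im. simpl.
  replace (t * a - 0 * b) with (t * a) by ring. replace (t * b + 0 * a) with (t * b) by ring. ring.
Qed.

Lemma U_deriv c y j t : is_derive (U c y j) t (U c y (S j) t).
Proof.
  apply is_derive_ext with (f := fun t => fst (Cmult c (Cpow y j)) * (exp (t * fst y) * cos (t * snd y))
  - snd (Cmult c (Cpow y j)) * (exp (t * fst y) * sin (t * snd y))).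
  { intros; symmetry; apply U_eq. }
  rewrite U_eq.
  replace (Cmult c (Cpow y (S j))) with (Cmult (Cmult c (Cpow y j)) y).
  2:{ simpl. ring. }
  destruct (Cmult c (Cpow y j)) as [p q]. destruct y as [a b]. simpl.
  auto_derive; [auto|]. ring.
Qed.

Lemma Derive_n_U c y j : Derive_n (U c y 0) j = U c y j.
Proof.
  induction j; [reflexivity|].
  apply functional_extensionality; intro t. simpl. rewrite IHj.
  apply is_derive_unique, U_deriv.
Qed.

Lemma U_at0 c y j : U c y j 0 = fst (Cmult c (Cpow y j)).
Proof.
  rewrite U_eq. rewrite !Rmult_0_l, exp_0, cos_0, sin_0. ring.
Qed.

Lemma fst_sum (f : nat -> Complex.C) m : fst (sum_n f m) = sum_n (fun n => fst (f n)) m.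
Proof.
  induction m.
  - rewrite !sum_O. reflexivity.
  - rewrite !sum_Sn. simpl. rewrite <- IHm. reflexivity.
Qed.

Lemma Cmod_le_sum (w : Complex.C) : Cmod w <= Rabs (fst w) + Rabs (snd w).
Proof.
  unfold Cmod. rewrite <- (Rabs_pos_eq (Rabs (fst w) + Rabs (snd w))).
  2:{ pose proof (Rabs_pos (fst w)); pose proof (Rabs_pos (snd w)); lra. }
  rewrite <- sqrt_Rsqr_abs. apply sqrt_le_1_alt. unfold Rsqr.
  rewrite <- (Rabs_pos_eq (fst w ^ 2)) by (apply pow2_ge_0).
  rewrite <- (Rabs_pos_eq (snd w ^ 2)) by (apply pow2_ge_0).
  rewrite <- !RPow_abs. pose proof (Rabs_pos (fst w)); pose proof (Rabs_pos (snd w)). nra.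
Qed.

Lemma fst_Cminus (a b : C) : fst (Cminus a b) = fst a - fst b.
Proof. reflexivity. Qed.

Definition Tpoly (m : nat) (y : Complex.C) : Complex.C := sum_n (fun n => Cmult (RtoC (/ INR (fact n))) (Cpow y n)) m.

Lemma taylor_comp c y m : Cmod y <= 1 ->
  Rabs (fst (Cmult c (Cminus (Cexp y) (Tpoly m y)))) <= Cmod c * 3 * Cmod y ^ (S m).
Proof.
  intros Hy.
  destruct (Taylor_Lagrange (U c y 0) m 0 1 Rlt_0_1) as [zeta [[Hz0 Hz1] Heq]].
  { intros t Ht k Hk. destruct k; [exact I|]. simpl. rewrite Derive_n_U. eexists. apply U_deriv. }
  rewrite Derive_n_U in Heq.
  assert (E1 : U c y 0 1 = fst (Cmult c (Cexp y))).
  { rewrite U_eq. destruct c as [c1 c2], y as [a b]. unfold Cexp, Defs.Re, Defs.Im; simpl. rewrite !Rmult_1_l. ring. }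
  assert (E2 : fst (Cmult c (Cminus (Cexp y) (Tpoly m y))) =
     U c y 0 1 - sum_f_R0 (fun m0 => (1 - 0) ^ m0 / INR (fact m0) * Derive_n (U c y 0) m0 0) m).
  { rewrite E1. replace (Cmult c (Cminus (Cexp y) (Tpoly m y))) with
      (Cminus (Cmult c (Cexp y)) (Cmult c (Tpoly m y))) by ring.
    rewrite fst_Cminus.
    cut (fst (Cmult c (Tpoly m y)) = sum_f_R0 (fun m0 => (1 - 0) ^ m0 / INR (fact m0) * Derive_n (U c y 0) m0 0) m).
    { intros ->; reflexivity. }
    unfold Tpoly. rewrite sumC_mult_l. rewrite fst_sum. rewrite <- sum_n_Reals.
    apply sum_n_ext. intros n. rewrite Derive_n_U, U_at0.
    replace (Cmult c (Cmult (RtoC (/ INR (fact n))) (Cpow y n))) with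
      (Cmult (RtoC (/ INR (fact n))) (Cmult c (Cpow y n))) by ring.
    destruct (Cmult c (Cpow y n)) as [p q]. simpl. replace (1 - 0) with 1 by ring.
    rewrite pow1. field. apply INR_fact_neq_0. }
  rewrite E2. rewrite Heq. ring_simplify (1 - 0). rewrite pow1.
  match goal with |- Rabs (?A + ?B - ?A) <= _ => replace (A + B - A) with B by ring end.
  rewrite Rabs_mult. unfold U.
  assert (Hf : 1 <= INR (fact (S m))). { apply (le_INR 1). apply Factorial.lt_O_fact. }
  rewrite Rabs_pos_eq by (apply Rlt_le, Rdiv_lt_0_compat; lra).
  eapply Rle_trans. apply Rmult_le_compat_r. apply Rabs_pos.
  apply (Rmult_le_reg_l (INR (fact (S m)))). lra. rewrite Rmult_1_r. unfold Rdiv. rewrite Rmult_1_l.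
  rewrite Rinv_r by lra. exact Hf. rewrite Rmult_1_l.
  eapply Rle_trans. apply re_le_Cmod. unfold Re.
  rewrite !Complex.Cmod_mult, Cmod_pow.
  rewrite Cmod_Cexp. simpl fst. rewrite Rmult_0_l. unfold Rminus; rewrite Ropp_0, Rplus_0_r.
  assert (Hfy : Rabs (fst y) <= 1). { eapply Rle_trans; [apply (re_le_Cmod y)|exact Hy]. }
  assert (Hz : zeta * fst y <= 1).
  { pose proof (Rle_abs (fst y)). pose proof (Rabs_pos (fst y)).
    apply Rle_trans with (zeta * Rabs (fst y)). apply Rmult_le_compat_l; lra. nra. }
  assert (He : exp (zeta * fst y) <= 3). { eapply Rle_trans; [apply exp_le; exact Hz|apply exp_le_3]. }
  pose proof (Cmod_ge_0 c). pose proof (pow_le _ (S m) (Cmod_ge_0 y)). pose proof (exp_pos (zeta * fst y)).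
  replace (Cmod c * 3 * Cmod y ^ S m) with (Cmod c * (Cmod y ^ S m * 3)) by ring.
  apply Rmult_le_compat_l; auto. apply Rmult_le_compat_l; auto.
Qed.

Lemma exp_taylor m y : Cmod y <= 1 -> Cmod (Cminus (Cexp y) (Tpoly m y)) <= 6 * Cmod y ^ (S m).
Proof.
  intros Hy. pose proof (taylor_comp (RtoC 1) y m Hy) as H1.
  pose proof (taylor_comp (0, -1) y m Hy) as H2.
  rewrite Cmult_1_l in H1. rewrite Cmod_R, Rabs_R1 in H1.
  assert (Hc : Cmod (0, -1) = 1).
  { unfold Cmod. simpl. replace (0 * (0 * 1) + -1 * (-1 * 1)) with 1 by ring. apply sqrt_1. }
  rewrite Hc in H2.
  assert (E : fst (Cmult (0, -1) (Cminus (Cexp y) (Tpoly m y))) = snd (Cminus (Cexp y) (Tpoly m y))).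
  { destruct (Cminus (Cexp y) (Tpoly m y)). simpl. ring. }
  rewrite E in H2.
  eapply Rle_trans. apply Cmod_le_sum. lra.
Qed.

Lemma Cpowz_nat x m : Cpowz x (Z.of_nat m) = Cpow x m.
Proof. destruct m; [reflexivity|]. simpl. rewrite SuccNat2Pos.id_succ. apply Cpow_E. Qed.

Lemma Cpowz_mul_x x l : x <> RtoC 0 -> Cmult (Cpowz x (Z.of_nat l - 1)) x = Cpow x l.
Proof.
  intros Hx. destruct l.
  - simpl. change (Defs.Cinv (Cmul x C1)) with (Cinv (Cmult x (RtoC 1))). field. intro H.
    apply Hx. rewrite <- H. ring.
  - replace (Z.of_nat (S l) - 1)%Z with (Z.of_nat l) by lia. rewrite Cpowz_nat.
    rewrite Cpow_S. ring.
Qed.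

Lemma Cmod_Cpowz_le x l L : 1 <= Cmod x -> (l <= L)%nat -> Cmod (Cpowz x (Z.of_nat l - 1)) <= Cmod x ^ L.
Proof.
  intros Hx Hl. destruct l.
  - simpl. rewrite Cinv_E, Cmul_E. change C1 with (RtoC 1). rewrite Cmult_1_r.
    assert (x <> RtoC 0). { intro H; rewrite H, Cmod_R, Rabs_R0 in Hx; lra. }
    rewrite Cmod_inv by auto. apply Rle_trans with 1.
    rewrite <- Rinv_1. apply Rinv_le_contravar; lra. apply pow_R1_Rle; auto.
  - replace (Z.of_nat (S l) - 1)%Z with (Z.of_nat l) by lia. rewrite Cpowz_nat, Cmod_pow.
    apply Rle_pow; auto. lia.
Qed.

Lemma Cmod_sum_le (f : nat -> C) n : Cmod (sum_n f n) <= sum_n (fun i => Cmod (f i)) n.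
Proof.
  induction n.
  - rewrite !sum_O. lra.
  - rewrite !sum_Sn. eapply Rle_trans. apply Cmod_triangle. change (plus ?a ?b) with (a + b).
    apply Rplus_le_compat_r. exact IHn.
Qed.

Lemma sumR_le (f g : nat -> R) n : (forall i, (i <= n)%nat -> f i <= g i) -> sum_n f n <= sum_n g n.
Proof.
  intros H. induction n.
  - rewrite !sum_O. apply H; lia.
  - rewrite !sum_Sn. change (plus ?a ?b) with (a + b). apply Rplus_le_compat.
    apply IHn. intros; apply H; lia. apply H; lia.
Qed.

Lemma sumR_const_le (f : nat -> R) n B : (forall i, (i <= n)%nat -> f i <= B) -> sum_n f n <= INR (S n) * B.
Proof. intros H. rewrite <- sum_n_const. apply sumR_le. auto. Qed.

Lemma RtoC_sum (f : nat -> R) n : RtoC (sum_n f n) = sum_n (fun i => RtoC (f i)) n.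
Proof.
  induction n.
  - rewrite !sum_O. reflexivity.
  - rewrite !sum_Sn. change (plus (sum_n f n) (f (S n))) with (sum_n f n + f (S n)).
    rewrite RtoC_plus, IHn. reflexivity.
Qed.

Lemma Cexp_minus1_lb x : fst x <= Cmod (Cminus (Cexp x) (RtoC 1)).
Proof.
  pose proof (Cmod_triangle (Cminus (Cexp x) (RtoC 1)) (RtoC 1)) as H.
  assert (E : forall e : C, Cplus (Cminus e (RtoC 1)) (RtoC 1) = e) by (intros; ring).
  rewrite E in H.
  rewrite Cmod_Cexp, Cmod_R, Rabs_R1 in H. pose proof (exp_ineq1_le (fst x)). lra.
Qed.

Definition cl (lam : R) (l : nat) : C := RtoC (bernpoly l lam / INR (fact l)).
Definition Sx (L : nat) (lam : R) (x : C) : C :=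
  sum_n (fun l => Cmult (cl lam l) (Cpowz x (Z.of_nat l - 1))) L.
Definition Px (L : nat) (lam : R) (x : C) : C :=
  sum_n (fun l => Cmult (cl lam l) (Cpow x l)) L.

Lemma Sx_Px L lam x : x <> RtoC 0 -> Cmult (Sx L lam x) x = Px L lam x.
Proof.
  intros Hx. unfold Sx, Px. rewrite sumC_mult_r. apply sum_n_ext. intros l.
  rewrite <- Cpowz_mul_x by auto. toC; ring.
Qed.

Lemma Tpoly_S_minus1 M x : Cminus (Tpoly (S M) x) (RtoC 1) =
  sum_n (fun j => Cmult (RtoC (/ INR (fact (S j)))) (Cpow x (S j))) M.
Proof.
  unfold Tpoly. rewrite sum_n_shift. change (plus ?a ?b) with (Cplus a b).
  simpl fact. simpl Cpow. replace (/ INR 1) with 1 by (simpl; field). ring.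
Qed.

Lemma poly_id L lam x :
  sum_n (fun l => Cmult (Cmult (cl lam l) (Cpow x l)) (Cminus (Tpoly (S L - l) x) (RtoC 1))) L
  = Cmult x (Tpoly L (Cmult (RtoC lam) x)).
Proof.
  set (h := fun l j => Cmult (RtoC (bernpoly l lam / (INR (fact l) * INR (fact (S j))))) (Cpow x (S (l + j)))).
  rewrite (sum_n_ext_loc _ (fun l => sum_n (fun j => h l j) (L - l))).
  2:{ intros l Hl. replace (S L - l)%nat with (S (L - l)) by lia. rewrite Tpoly_S_minus1.
      rewrite sumC_mult_l. apply sum_n_ext. intros j. unfold h, cl.
      replace (S (l + j)) with (l + S j)%nat by lia. rewrite Cpow_add_r.
      replace (bernpoly l lam / (INR (fact l) * INR (fact (S j)))) with
        (bernpoly l lam / INR (fact l) * / INR (fact (S j))).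
      2:{ pose proof (INR_fact_neq_0 l). pose proof (INR_fact_neq_0 (S j)). field; auto. }
      rewrite RtoC_mult. toC; ring. }
  rewrite (sum_n_diag (G:=C_AbelianMonoid) h).
  unfold Tpoly. rewrite sumC_mult_l. apply sum_n_ext_loc. intros s Hs.
  rewrite (sum_n_ext_loc _ (fun a => Cmult (RtoC (bernpoly a lam / (INR (fact a) * INR (fact (S s - a))))) (Cpow x (S s)))).
  2:{ intros a Ha. unfold h. replace (S (s - a)) with (S s - a)%nat by lia.
      replace (S (a + (s - a))) with (S s) by lia. reflexivity. }
  rewrite <- sumC_mult_r, <- RtoC_sum, bernpoly_div.
  rewrite Cpow_mult_l, <- RtoC_pow. unfold Rdiv. rewrite RtoC_mult.
  rewrite Cpow_S. toC; ring.
Qed.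

Definition cexp (x : C) : C := Cexp x.

Lemma Cmod_cexp x : Cmod (cexp x) = exp (fst x).
Proof. apply Cmod_Cexp. Qed.

Lemma cexp_minus1_lb2 x : exp (fst x) - 1 <= Cmod (Cminus (cexp x) (RtoC 1)).
Proof.
  pose proof (Cmod_triangle (Cminus (cexp x) (RtoC 1)) (RtoC 1)) as H.
  replace (Cplus (Cminus (cexp x) (RtoC 1)) (RtoC 1)) with (cexp x) in H by ring.
  rewrite Cmod_cexp, Cmod_R, Rabs_R1 in H. lra.
Qed.

Lemma cexp_minus1_lb x : fst x <= Cmod (Cminus (cexp x) (RtoC 1)).
Proof. pose proof (cexp_minus1_lb2 x). pose proof (exp_ineq1_le (fst x)). lra. Qed.

Lemma ratio_mono a t : 1 < a -> a <= t -> t / (t - 1) <= a / (a - 1).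
Proof.
  intros Ha Ht.
  replace (t / (t - 1)) with (a / (a - 1) + (a - t) / ((t - 1) * (a - 1))) by (field; lra).
  assert ((a - t) / ((t - 1) * (a - 1)) <= 0).
  { unfold Rdiv. apply Rmult_le_0_r. lra. left; apply Rinv_0_lt_compat. nra. }
  lra.
Qed.

Lemma Cmod_cl lam l Bm : Rabs (bernpoly l lam) <= Bm -> Cmod (cl lam l) <= Bm.
Proof.
  intros H. unfold cl. rewrite Cmod_R. unfold Rdiv. rewrite Rabs_mult.
  rewrite (Rabs_pos_eq (/ _)) by (left; apply Rinv_0_lt_compat, lt_0_INR, Factorial.lt_O_fact).
  assert (1 <= INR (fact l)) by (apply (le_INR 1), Factorial.lt_O_fact).
  assert (/ INR (fact l) <= 1). { rewrite <- Rinv_1. apply Rinv_le_contravar; lra. }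
  assert (0 < / INR (fact l)) by (apply Rinv_0_lt_compat; lra).
  pose proof (Rabs_pos (bernpoly l lam)). nra.
Qed.

Definition Qf (lam : R) (x : C) : C := Cdiv (cexp (Cmult (RtoC lam) x)) (Cminus (cexp x) (RtoC 1)).

Lemma remainder L c0 Bm : 0 < c0 -> 0 <= Bm -> exists K, forall lam x,
  0 <= lam <= 1 -> (forall l, (l <= L)%nat -> Rabs (bernpoly l lam) <= Bm) ->
  0 < fst x -> c0 * Cmod x <= fst x ->
  Cmod (Cminus (Qf lam x) (Sx L lam x)) <= K * Cmod x ^ L.
Proof.
  intros Hc0 HBm.
  set (G0 := exp c0 / (exp c0 - 1)).
  set (A1 := INR (S L) * Bm).
  set (A2 := 6 * (A1 + 1) / c0).
  assert (Hec : 1 < exp c0). { pose proof (exp_ineq1 c0). lra. }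
  assert (HG0 : 0 < G0). { unfold G0. apply Rdiv_lt_0_compat; lra. }
  assert (HA1 : 0 <= A1). { unfold A1. apply Rmult_le_pos; auto. apply pos_INR. }
  assert (HA2 : 0 <= A2). { unfold A2. apply Rmult_le_pos; [lra|]. left; apply Rinv_0_lt_compat; lra. }
  exists (G0 + A1 + A2). intros lam x Hlam HB Hfx Hsec.
  assert (Hx0 : x <> RtoC 0). { intro H; rewrite H in Hfx; simpl in Hfx; lra. }
  set (D := Cminus (cexp x) (RtoC 1)).
  assert (HD : fst x <= Cmod D) by apply cexp_minus1_lb.
  assert (HD0 : D <> RtoC 0). { intro H. rewrite H, Cmod_R, Rabs_R0 in HD. lra. }
  assert (Hcl : forall l, (l <= L)%nat -> Cmod (cl lam l) <= Bm). { intros; apply Cmod_cl; auto. }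
  pose proof (Cmod_ge_0 x) as Hxn.
  destruct (Rle_or_lt 1 (Cmod x)) as [Hbig|Hsmall].
  -
    assert (HxL : 1 <= Cmod x ^ L) by (apply pow_R1_Rle; auto).
    eapply Rle_trans. unfold Cminus. apply Cmod_triangle. rewrite Cmod_opp.
    assert (HQ : Cmod (Qf lam x) <= G0).
    { unfold Qf. fold D. rewrite Cmod_div by auto. rewrite Cmod_cexp.
      assert (HD2 : exp (fst x) - 1 <= Cmod D) by apply cexp_minus1_lb2.
      assert (Hr : c0 <= fst x) by nra.
      assert (Hex : exp c0 <= exp (fst x)) by (apply exp_le; auto).
      assert (Hl : exp (fst (Cmult (RtoC lam) x)) <= exp (fst x)).
      { apply exp_le. simpl. nra. }
      apply Rle_trans with (exp (fst x) / (exp (fst x) - 1)).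
      - unfold Rdiv. apply Rmult_le_compat. left; apply exp_pos. left; apply Rinv_0_lt_compat; lra. auto.
        apply Rinv_le_contravar; lra.
      - apply ratio_mono; lra. }
    assert (HS : Cmod (Sx L lam x) <= A1 * Cmod x ^ L).
    { unfold Sx. eapply Rle_trans. apply Cmod_sum_le. unfold A1. rewrite Rmult_assoc.
      apply sumR_const_le. intros l Hl. rewrite Complex.Cmod_mult.
      apply Rmult_le_compat; auto using Cmod_ge_0. apply Cmod_Cpowz_le; auto. }
    assert (0 <= A2 * Cmod x ^ L) by (apply Rmult_le_pos; auto; lra).
    nra.
  -
    set (e := cexp (Cmult (RtoC lam) x)).
    set (T := fun l => Tpoly (S L - l) x).
    assert (Hid : Cmult (Cminus (Qf lam x) (Sx L lam x)) (Cmult x D) =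
      Cminus (Cmult x (Cminus e (Tpoly L (Cmult (RtoC lam) x))))
             (sum_n (fun l => Cmult (Cmult (cl lam l) (Cpow x l)) (Cminus (cexp x) (T l))) L)).
    { assert (E1 : Cmult (Cminus (Qf lam x) (Sx L lam x)) (Cmult x D) =
                   Cminus (Cmult x e) (Cmult D (Cmult (Sx L lam x) x))).
      { unfold Qf. fold D. fold e. unfold Cdiv. field. auto. }
      rewrite E1, Sx_Px by auto. unfold Px. rewrite (Cmult_comm D), sumC_mult_r.
      rewrite (sum_n_ext _ (fun l => Cplus (Cmult (Cmult (cl lam l) (Cpow x l)) (Cminus (cexp x) (T l)))
                                           (Cmult (Cmult (cl lam l) (Cpow x l)) (Cminus (T l) (RtoC 1))))).
      2:{ intros l. unfold D. toC; ring. }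
      rewrite sumC_plus. unfold T. rewrite poly_id. toC; ring. }
    assert (HE : Cmod (Cminus (Cmult x (Cminus e (Tpoly L (Cmult (RtoC lam) x))))
             (sum_n (fun l => Cmult (Cmult (cl lam l) (Cpow x l)) (Cminus (cexp x) (T l))) L))
             <= 6 * (A1 + 1) * Cmod x ^ (S (S L))).
    { eapply Rle_trans. unfold Cminus at 1. apply Cmod_triangle. rewrite Cmod_opp.
      assert (H1 : Cmod (Cmult x (Cminus e (Tpoly L (Cmult (RtoC lam) x)))) <= 6 * Cmod x ^ (S (S L))).
      { rewrite Complex.Cmod_mult.
        assert (Hlx : Cmod (Cmult (RtoC lam) x) <= Cmod x).
        { rewrite Complex.Cmod_mult, Cmod_R, Rabs_pos_eq by lra. nra. }
        pose proof (exp_taylor L (Cmult (RtoC lam) x) ltac:(lra)) as Ht.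
        change (Cexp (Cmult (RtoC lam) x)) with e in Ht.
        assert (Cmod (Cmult (RtoC lam) x) ^ S L <= Cmod x ^ S L).
        { apply pow_incr. split; auto using Cmod_ge_0. }
        change (Cmod x ^ S (S L)) with (Cmod x * Cmod x ^ S L).
        apply Rle_trans with (Cmod x * (6 * Cmod (Cmult (RtoC lam) x) ^ S L)).
        apply Rmult_le_compat_l; auto. nra. }
      assert (H2 : Cmod (sum_n (fun l => Cmult (Cmult (cl lam l) (Cpow x l)) (Cminus (cexp x) (T l))) L)
                   <= A1 * 6 * Cmod x ^ (S (S L))).
      { eapply Rle_trans. apply Cmod_sum_le. unfold A1. rewrite !Rmult_assoc.
        apply sumR_const_le. intros l Hl. rewrite !Complex.Cmod_mult, Cmod_pow.
        pose proof (exp_taylor (S L - l) x ltac:(lra)) as Ht. change (Cexp x) with (cexp x) in Ht.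
        fold (T l) in Ht.
        assert (Hp : Cmod x ^ l * Cmod x ^ S (S L - l) = Cmod x ^ S (S L)).
        { rewrite <- pow_add. f_equal. lia. }
        pose proof (pow_le _ l Hxn). pose proof (Hcl l Hl). pose proof (Cmod_ge_0 (cl lam l)).
        pose proof (Cmod_ge_0 (Cminus (cexp x) (T l))).
        apply Rle_trans with (Bm * Cmod x ^ l * (6 * Cmod x ^ S (S L - l))).
        { apply Rmult_le_compat; auto. apply Rmult_le_pos; auto. apply Rmult_le_compat; auto. lra. }
        rewrite <- Hp. lra. }
      lra. }
    rewrite <- Hid in HE. rewrite !Complex.Cmod_mult in HE.
    set (F := Cmod (Cminus (Qf lam x) (Sx L lam x))) in *.
    assert (HF : 0 <= F) by apply Cmod_ge_0.
    assert (Hxpos : 0 < Cmod x). { apply Cmod_gt_0. auto. }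
    assert (HcD : c0 * Cmod x <= Cmod D) by lra.
    assert (F * (c0 * Cmod x ^ 2) <= 6 * (A1 + 1) * Cmod x ^ 2 * Cmod x ^ L).
    { apply Rle_trans with (F * (Cmod x * Cmod D)).
      - apply Rmult_le_compat_l; auto. simpl. nra.
      - replace (6 * (A1 + 1) * Cmod x ^ 2 * Cmod x ^ L) with (6 * (A1 + 1) * Cmod x ^ S (S L)) by (simpl; ring). lra. }
    assert (0 < c0 * Cmod x ^ 2) by (apply Rmult_lt_0_compat; auto; apply pow_lt; auto).
    assert (F <= A2 * Cmod x ^ L).
    { unfold A2. apply (Rmult_le_reg_r (c0 * Cmod x ^ 2)); auto.
      replace (6 * (A1 + 1) / c0 * Cmod x ^ L * (c0 * Cmod x ^ 2)) with (6 * (A1 + 1) * Cmod x ^ 2 * Cmod x ^ L)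
        by (field; lra). lra. }
    pose proof (pow_le _ L Hxn). nra.
Qed.

Lemma Cpartial_S (f : nat -> C) n : Cpartial f (S n) = sum_n f n.
Proof.
  induction n.
  - simpl. rewrite sum_O. change (Cadd C0 (f 0%nat)) with (Cplus (RtoC 0) (f 0%nat)). toC; ring.
  - change (Cpartial f (S (S n))) with (Cadd (Cpartial f (S n)) (f (S n))). rewrite IHn, sum_Sn. reflexivity.
Qed.

Lemma is_series_has_sum (f : nat -> C) s : is_series f s -> has_sum f s.
Proof.
  intros H eps Heps.
  assert (Hnf := @norm_factor_gt_0 C_AbsRing C_NormedModule).
  assert (Hp : 0 < eps / (@norm_factor C_AbsRing C_NormedModule)) by (apply Rdiv_lt_0_compat; auto).
  unfold is_series in H. pose proof (proj1 (filterlim_locally (sum_n f) s) H (mkposreal _ Hp)) as H'.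
  destruct H' as [N HN]. exists (S N). intros n Hn.
  destruct n as [|n]; [lia|]. rewrite Cpartial_S. unfold R_dist. rewrite Rminus_0_r.
  rewrite Rabs_pos_eq by apply Cmod_ge_0.
  specialize (HN n ltac:(lia)). apply (@norm_compat2 C_AbsRing C_NormedModule) in HN. simpl in HN.
  change (norm (minus (sum_n f n) s)) with (Cmod (Cminus (sum_n f n) s)) in HN. replace (norm_factor * (eps / norm_factor)) with eps in HN by (field; lra).
  exact HN.
Qed.

Lemma has_sum_is_series (f : nat -> C) s : has_sum f s -> is_series f s.
Proof.
  intros H. unfold is_series. apply (proj2 (filterlim_locally _ _)). intros eps.
  destruct (H eps (cond_pos eps)) as [N HN]. exists N. intros n Hn.
  apply (@norm_compat1 C_AbsRing C_NormedModule). specialize (HN (S n) ltac:(lia)). rewrite Cpartial_S in HN.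
  unfold R_dist in HN. rewrite Rminus_0_r, Rabs_pos_eq in HN by apply Cmod_ge_0.
  change (norm (minus (sum_n f n) s)) with (Cmod (Cminus (sum_n f n) s)). exact HN.
Qed.

Lemma Csum_is (f : nat -> C) s : is_series f s -> Csum f = s.
Proof.
  intros H. assert (Hh : has_sum f (Csum f)).
  { unfold Csum. apply epsilon_spec. exists s. apply is_series_has_sum; auto. }
  apply has_sum_is_series in Hh.
  exact (filterlim_locally_unique _ _ _ Hh H).
Qed.

Lemma ex_Csum (f : nat -> C) : ex_series f -> is_series f (Csum f).
Proof. intros [s Hs]. rewrite (Csum_is f s Hs). exact Hs. Qed.

Lemma is_series_Cmult_l (c : C) (f : nat -> C) s : is_series f s -> is_series (fun n => Cmult c (f n)) (Cmult c s).
Proof. intros H. exact (@is_series_scal_l C_AbsRing C_NormedModule c f s H). Qed.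

Lemma is_series_Cplus (f g : nat -> C) s t : is_series f s -> is_series g t -> is_series (fun n => Cplus (f n) (g n)) (Cplus s t).
Proof. intros H1 H2. exact (@is_series_plus C_AbsRing C_NormedModule f g s t H1 H2). Qed.

Lemma is_series_Cminus (f g : nat -> C) s t : is_series f s -> is_series g t -> is_series (fun n => Cminus (f n) (g n)) (Cminus s t).
Proof. intros H1 H2. exact (@is_series_minus C_AbsRing C_NormedModule f g s t H1 H2). Qed.

Lemma is_series_sum_n (G : nat -> nat -> C) (Sm : nat -> C) L :
  (forall l, (l <= L)%nat -> is_series (G l) (Sm l)) ->
  is_series (fun i => sum_n (fun l => G l i) L) (sum_n Sm L).
Proof.
  induction L; intros H.
  - rewrite sum_O. apply is_series_ext with (G 0%nat). intros; rewrite sum_O; auto. apply H; lia.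
  - rewrite sum_Sn. apply is_series_ext with (fun i => Cplus (sum_n (fun l => G l i) L) (G (S L) i)).
    intros; rewrite sum_Sn; reflexivity.
    apply is_series_Cplus. apply IHL; intros; apply H; lia. apply H; lia.
Qed.

Lemma is_series_bound (f : nat -> C) s (b : nat -> R) B :
  is_series f s -> (forall n, Cmod (f n) <= b n) -> (forall n, sum_n b n <= B) -> Cmod s <= B.
Proof.
  intros H Hb HB.
  assert (HP : forall n, Cmod (sum_n f n) <= B).
  { intros n. eapply Rle_trans. apply Cmod_sum_le. eapply Rle_trans; [|apply (HB n)].
    apply sumR_le. intros; apply Hb. }
  destruct (Rle_or_lt (Cmod s) B) as [|Hc]; auto. exfalso.
  assert (Hnf := @norm_factor_gt_0 C_AbsRing C_NormedModule).
  assert (Hp : 0 < (Cmod s - B) / (@norm_factor C_AbsRing C_NormedModule)) by (apply Rdiv_lt_0_compat; lra).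
  unfold is_series in H. pose proof (proj1 (filterlim_locally (sum_n f) s) H (mkposreal _ Hp)) as H'.
  destruct H' as [N HN]. specialize (HN N (le_n _)). apply (@norm_compat2 C_AbsRing C_NormedModule) in HN. simpl in HN.
  change (norm (minus (sum_n f N) s)) with (Cmod (Cminus (sum_n f N) s)) in HN. replace (norm_factor * ((Cmod s - B) / norm_factor)) with (Cmod s - B) in HN by (field; lra).
  pose proof (Cmod_triangle (minus (sum_n f N) s) (Copp (sum_n f N))) as T.
  replace (Cplus (minus (sum_n f N) s) (Copp (sum_n f N))) with (Copp s) in T.
  2:{ change (minus (sum_n f N) s) with (Cminus (sum_n f N) s). ring. }
  change (minus (sum_n f N) s) with (Cminus (sum_n f N) s) in T.
  rewrite !Cmod_opp in T. specialize (HP N). lra.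
Qed.

Lemma exp_pow_nat a n : exp a ^ n = exp (INR n * a).
Proof.
  induction n.
  - simpl. rewrite Rmult_0_l, exp_0. reflexivity.
  - rewrite S_INR. simpl. rewrite IHn, <- exp_plus. f_equal. ring.
Qed.

Lemma poly_exp_bound p d : 0 < d -> exists A, 0 <= A /\ forall t, 0 <= t -> t ^ p <= A * exp (d * t).
Proof.
  intros Hd. set (q := INR (S p)). assert (Hq : 0 < q) by (apply lt_0_INR; lia).
  exists (/ (d / q) ^ p). split. { left. apply Rinv_0_lt_compat, pow_lt, Rdiv_lt_0_compat; auto. }
  intros t Ht. set (s := d / q * t).
  assert (Hs : 0 <= s) by (unfold s; apply Rmult_le_pos; auto; left; apply Rdiv_lt_0_compat; auto).
  assert (H1 : s ^ p <= exp s ^ p). { apply pow_incr. split; auto. pose proof (exp_ineq1_le s). lra. }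
  rewrite exp_pow_nat in H1.
  assert (H2 : exp (INR p * s) <= exp (d * t)).
  { apply exp_le. unfold s. assert (INR p <= q) by (unfold q; apply le_INR; lia).
    replace (INR p * (d / q * t)) with ((INR p / q) * (d * t)) by (field; lra).
    assert (INR p / q <= 1). { unfold Rdiv. apply (Rmult_le_reg_r q); auto. rewrite Rmult_assoc, Rinv_l by lra. lra. }
    assert (0 <= d * t) by nra. pose proof (pos_INR p). assert (0 <= INR p / q) by (apply Rmult_le_pos; auto; left; apply Rinv_0_lt_compat; auto). nra. }
  assert (Ht' : t ^ p = / (d / q) ^ p * s ^ p).
  { unfold s. rewrite Rpow_mult_distr. field. apply pow_nonzero. apply Rgt_not_eq, Rdiv_lt_0_compat; auto. }
  rewrite Ht'. apply Rmult_le_compat_l. left; apply Rinv_0_lt_compat, pow_lt, Rdiv_lt_0_compat; auto. lra.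
Qed.

Lemma pow_geom_bound p d : 0 < d -> exists A, 0 <= A /\ forall r : nat, INR r ^ p * exp (- d) ^ r <= A * exp (- d / 2) ^ r.
Proof.
  intros Hd. destruct (poly_exp_bound p (d / 2) ltac:(lra)) as [A [HA H]].
  exists A. split; auto. intros r. rewrite !exp_pow_nat.
  pose proof (H (INR r) (pos_INR r)).
  apply Rle_trans with (A * exp (d / 2 * INR r) * exp (INR r * - d)).
  apply Rmult_le_compat_r; auto. left; apply exp_pos.
  rewrite Rmult_assoc, <- exp_plus. right. f_equal. f_equal. field.
Qed.

Lemma geom_sum_le q n : 0 <= q < 1 -> sum_n (fun i => q ^ i) n <= / (1 - q).
Proof.
  intros Hq. rewrite sum_n_Reals, tech3 by lra.
  unfold Rdiv. rewrite <- (Rmult_1_l (/ (1 - q))) at 2. apply Rmult_le_compat_r. left; apply Rinv_0_lt_compat; lra.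
  pose proof (pow_le q (S n) (proj1 Hq)). lra.
Qed.

Lemma pow_eq1 t k : 0 <= t -> (1 <= k)%nat -> t ^ k = 1 -> t = 1.
Proof.
  intros Ht Hk H. destruct k; [lia|]. clear Hk.
  destruct (Rtotal_order t 1) as [Hl|[He|Hg]]; auto; exfalso.
  - assert (forall n, t ^ S n < 1). { induction n. simpl; lra. simpl in *. nra. }
    specialize (H0 k). lra.
  - assert (forall n, 1 < t ^ S n). { induction n. simpl; lra. simpl in *. nra. }
    specialize (H0 k). lra.
Qed.

Lemma fin_bound1 (f : nat -> R) n : exists B, 0 <= B /\ forall i, (i <= n)%nat -> Rabs (f i) <= B.
Proof.
  induction n.
  - exists (Rabs (f 0%nat)). split. apply Rabs_pos. intros i Hi. replace i with 0%nat by lia. lra.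
  - destruct IHn as [B [HB H]]. exists (Rmax B (Rabs (f (S n)))). split.
    eapply Rle_trans; [exact HB|apply Rmax_l].
    intros i Hi. destruct (Nat.eq_dec i (S n)). subst. apply Rmax_r.
    eapply Rle_trans; [apply H; lia|apply Rmax_l].
Qed.

Lemma fin_bound2 (f : nat -> nat -> R) n m : exists B, 0 <= B /\ forall i j, (i <= n)%nat -> (j <= m)%nat -> Rabs (f i j) <= B.
Proof.
  induction n.
  - destruct (fin_bound1 (f 0%nat) m) as [B [HB H]]. exists B. split; auto. intros i j Hi Hj.
    replace i with 0%nat by lia. auto.
  - destruct IHn as [B [HB H]]. destruct (fin_bound1 (f (S n)) m) as [B' [HB' H']].
    exists (Rmax B B'). split. eapply Rle_trans; [exact HB|apply Rmax_l].
    intros i j Hi Hj. destruct (Nat.eq_dec i (S n)). subst. eapply Rle_trans; [apply H'; auto|apply Rmax_r].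
    eapply Rle_trans; [apply H; auto; lia|apply Rmax_l].
Qed.

Lemma Cpowz_mult a b n : a <> RtoC 0 -> b <> RtoC 0 -> Cpowz (Cmult a b) n = Cmult (Cpowz a n) (Cpowz b n).
Proof.
  intros Ha Hb. destruct n as [|p|p]; simpl.
  - change C1 with (RtoC 1). toC; ring.
  - rewrite (Cpow_E (Cmult a b)), (Cpow_E a), (Cpow_E b). apply Cpow_mult_l.
  - rewrite (Cpow_E (Cmult a b)), (Cpow_E a), (Cpow_E b).
    change (Cinv (Cpow (Cmult a b) (Pos.to_nat p)) = Cmult (Cinv (Cpow a (Pos.to_nat p))) (Cinv (Cpow b (Pos.to_nat p)))).
    rewrite Cpow_mult_l. field. split; apply Cpow_nz; auto.
Qed.

Lemma Cpowz_RtoC t n : t <> 0 -> Cpowz (RtoC t) n = RtoC (powerRZ t n).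
Proof.
  intros Ht. destruct n as [|p|p]; simpl.
  - reflexivity.
  - rewrite Cpow_E. rewrite <- RtoC_pow. reflexivity.
  - rewrite Cpow_E. rewrite <- RtoC_pow. change (Defs.Cinv (RtoC (t ^ Pos.to_nat p))) with (Cinv (RtoC (t ^ Pos.to_nat p))).
    rewrite RtoC_inv. reflexivity. apply pow_nonzero; auto.
Qed.

Lemma sign_id (r : R) (l : nat) : r <> 0 ->
  (-1) ^ l * powerRZ r (- (2 - Z.of_nat l)) = - / r * powerRZ (- r) (Z.of_nat l - 1).
Proof.
  intros Hr.
  replace (- (2 - Z.of_nat l))%Z with ((Z.of_nat l - 1) + (-1))%Z by lia.
  rewrite powerRZ_add by auto.
  replace (- r) with ((-1) * r) by ring. rewrite powerRZ_mult.
  rewrite pow_powerRZ. replace (Z.of_nat l) with ((Z.of_nat l - 1) + 1)%Z at 1 by lia.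
  rewrite powerRZ_add by lra. simpl. field. auto.
Qed.

Lemma exp_term_eq (r B : R) (l : nat) (y U : C) : r <> 0 -> y <> RtoC 0 ->
  Cmult (Cmult (RtoC ((-1) ^ l / INR (fact l) * B)) (Cpowz y (Z.of_nat l - 1)))
        (Cmult U (RtoC (powerRZ r (- (2 - Z.of_nat l)))))
  = Copp (Cmult (Cmult U (RtoC (/ r))) (Cmult (RtoC (B / INR (fact l))) (Cpowz (Cmult (RtoC (- r)) y) (Z.of_nat l - 1)))).
Proof.
  intros Hr Hy.
  assert (Hr' : RtoC (- r) <> RtoC 0). { intro H. apply RtoC_inj in H. lra. }
  rewrite Cpowz_mult, Cpowz_RtoC by (auto; lra).
  set (Y := Cpowz y (Z.of_nat l - 1)).
  transitivity (Cmult (RtoC ((-1) ^ l / INR (fact l) * B * powerRZ r (- (2 - Z.of_nat l)))) (Cmult Y U)).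
  { rewrite !RtoC_mult. toC; ring. }
  transitivity (Cmult (RtoC (- (/ r * (B / INR (fact l)) * powerRZ (- r) (Z.of_nat l - 1)))) (Cmult Y U)).
  2:{ rewrite RtoC_opp, !RtoC_mult. toC; ring. }
  f_equal. f_equal.
  pose proof (sign_id r l Hr). pose proof (INR_fact_neq_0 l).
  replace ((-1) ^ l / INR (fact l) * B * powerRZ r (- (2 - Z.of_nat l))) with
    (((-1) ^ l * powerRZ r (- (2 - Z.of_nat l))) * (B / INR (fact l))) by (field; auto).
  rewrite H. ring.
Qed.

Definition chiT (k : nat) (rho : C) (a : nat) (w : C) (N : nat) (i : nat) : C :=
  Cdiv (Cmult (Cmult (Cpow (Cinv rho) (S i * a)) (RtoC (/ INR (S i))))
              (Cmult (Cexp (Cmult (RtoC (- INR (S i))) w)) (Cexp (Cmult (RtoC (INR (S i) * INR a / INR N)) w))))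
       (Cminus (Cexp (Cmult (RtoC (INR k * INR (S i) / INR N)) w)) (RtoC 1)).

Lemma chi_unfold k rho a w N : chi k rho a w N = Csum (chiT k rho a w N).
Proof.
  reflexivity.
Qed.

Definition gl (l : nat) (u : C) (i : nat) : C :=
  Cmult (Cpow u (S i)) (RtoC (powerRZ (INR (S i)) (- (2 - Z.of_nat l)))).

Lemma Li_unfold l u : Li (2 - Z.of_nat l) u = Csum (gl l u).
Proof.
  reflexivity.
Qed.

Definition coefl (k : nat) (a : nat) (z : C) (N : nat) (l : nat) : C :=
  Cmult (RtoC ((-1) ^ l / INR (fact l) * bernpoly l (INR a / INR k)))
        (Cpowz (Cmult (RtoC (INR k / INR N)) z) (Z.of_nat l - 1)).

Lemma chi_expansion_unfold k rho a z N L : chi_expansion k rho a z N L =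
  @sum_n C_AbelianMonoid (fun l => Cmult (coefl k a z N l) (Csum (gl l (Cmult (Cpow (Cinv rho) a) (Cexp z))))) L.
Proof.
  unfold chi_expansion. rewrite Cpartial_S. apply (sum_n_ext (G:=C_AbelianMonoid)). intros l.
  rewrite <- Li_unfold. reflexivity.
Qed.

Definition xrz (k N : nat) (z : C) (r : R) : C := Cmult (RtoC (INR k * r / INR N)) (Copp z).

Lemma chiT_eq k rho a z N i : (1 <= k)%nat -> (1 <= N)%nat ->
  chiT k rho a (Copp z) N i =
  Cmult (Cmult (Cpow (Cmult (Cpow (Cinv rho) a) (Cexp z)) (S i)) (RtoC (/ INR (S i))))
        (Qf (INR a / INR k) (xrz k N z (INR (S i)))).
Proof.
  intros Hk HN. assert (HkR : INR k <> 0) by (apply not_0_INR; lia).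
  assert (HNR : INR N <> 0) by (apply not_0_INR; lia).
  unfold chiT, Qf, cexp, xrz.
  rewrite Nat.mul_comm, Cpow_mult_r.
  replace (Cmult (RtoC (- INR (S i))) (Copp z)) with (Cmult (RtoC (INR (S i))) z)
    by (rewrite RtoC_opp; toC; ring).
  rewrite Cexp_nat.
  replace (Cmult (RtoC (INR a / INR k)) (Cmult (RtoC (INR k * INR (S i) / INR N)) (Copp z)))
    with (Cmult (RtoC (INR (S i) * INR a / INR N)) (Copp z)).
  2:{ rewrite Cmult_assoc, <- RtoC_mult. f_equal. f_equal. field. split; auto. }
  unfold Cdiv. rewrite Cpow_mult_l. toC; ring.
Qed.

Lemma sumC_opp (f : nat -> C) n : sum_n (fun l => Copp (f l)) n = Copp (sum_n f n).
Proof.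
  induction n.
  - rewrite !sum_O. reflexivity.
  - rewrite !sum_Sn. change (plus ?a ?b) with (Cplus a b). rewrite IHn. toC; ring.
Qed.

Lemma xr_alt k N z r : (1 <= N)%nat ->
  xrz k N z r = Cmult (RtoC (- r)) (Cmult (RtoC (INR k / INR N)) z).
Proof.
  intros HN. assert (HNR : INR N <> 0) by (apply not_0_INR; lia).
  unfold xrz. rewrite Cmult_assoc, <- RtoC_mult.
  replace (- r * (INR k / INR N)) with (- (INR k * r / INR N)) by (field; auto).
  rewrite RtoC_opp. toC; ring.
Qed.

Definition Dt (k N L a : nat) (rho z : C) (i : nat) : C :=
  Cmult (Cmult (Cpow (Cmult (Cpow (Cinv rho) a) (Cexp z)) (S i)) (RtoC (/ INR (S i))))
        (Cminus (Qf (INR a / INR k) (xrz k N z (INR (S i)))) (Sx L (INR a / INR k) (xrz k N z (INR (S i))))).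

Lemma decomp k rho a z N L i : (1 <= k)%nat -> (1 <= N)%nat -> z <> RtoC 0 ->
  chiT k rho a (Copp z) N i =
  Cminus (Dt k N L a rho z i) (sum_n (fun l => Cmult (coefl k a z N l) (gl l (Cmult (Cpow (Cinv rho) a) (Cexp z)) i)) L).
Proof.
  intros Hk HN Hz. rewrite chiT_eq by auto.
  assert (HNR : INR N <> 0) by (apply not_0_INR; lia).
  assert (HkR : INR k <> 0) by (apply not_0_INR; lia).
  assert (Hy : Cmult (RtoC (INR k / INR N)) z <> RtoC 0).
  { apply Cmult_neq_0; auto. intro H; apply RtoC_inj in H. apply Rmult_integral in H.
    destruct H as [H|H]; [auto|]. apply Rinv_neq_0_compat in HNR. auto. }
  set (U := Cpow (Cmult (Cpow (Cinv rho) a) (Cexp z)) (S i)).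
  set (X := xrz k N z (INR (S i))).
  set (lam := INR a / INR k).
  rewrite (sum_n_ext _ (fun l => Copp (Cmult (Cmult U (RtoC (/ INR (S i)))) (Cmult (cl lam l) (Cpowz X (Z.of_nat l - 1)))))).
  2:{ intros l. unfold coefl, gl. fold U. rewrite exp_term_eq.
      - unfold X. rewrite xr_alt by auto. reflexivity.
      - apply not_0_INR; lia.
      - exact Hy. }
  rewrite sumC_opp, <- sumC_mult_l. unfold Dt. fold U. fold lam. fold X.
  unfold Sx. toC; ring.
Qed.

From Stdlib Require Import Reals Lra Lia ClassicalEpsilon FunctionalExtensionality List.
Require Import Defs.
Open Scope R_scope.

Lemma geom_ex c q : 0 <= q < 1 -> ex_series (fun n => c * q ^ S n).
Proof.
  intros Hq. apply (ex_series_ext (fun n => scal (c * q) (q ^ n))).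
  { intros n. unfold scal; simpl. unfold mult; simpl. ring. }
  apply (@ex_series_scal_l R_AbsRing R_NormedModule). apply ex_series_geom. rewrite Rabs_pos_eq; lra.
Qed.

Lemma geom_sum_S c q n : 0 <= c -> 0 <= q < 1 -> sum_n (fun i => c * q ^ S i) n <= c / (1 - q).
Proof.
  intros Hc Hq. rewrite (sum_n_ext _ (fun i => (c * q) * q ^ i)) by (intros; simpl; ring).
  rewrite <- sumR_mult_l. pose proof (geom_sum_le q n Hq).
  apply Rle_trans with (c * q * / (1 - q)). apply Rmult_le_compat_l; [apply Rmult_le_pos; lra| exact H].
  unfold Rdiv. apply Rmult_le_compat_r. left; apply Rinv_0_lt_compat; lra. nra.
Qed.

Lemma PRZ_bound r l L : 1 <= r -> (l <= L)%nat -> Rabs (powerRZ r (- (2 - Z.of_nat l))) <= r ^ L.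
Proof.
  intros Hr Hl. rewrite Rabs_pos_eq by (apply powerRZ_le; lra).
  destruct l as [|[|m]].
  - simpl. assert (1 <= r * (r * 1)) by nra. apply Rle_trans with 1.
    rewrite <- Rinv_1. apply Rinv_le_contravar; lra. apply pow_R1_Rle; auto.
  - simpl. apply Rle_trans with 1. rewrite <- Rinv_1. apply Rinv_le_contravar; lra. apply pow_R1_Rle; auto.
  - replace (- (2 - Z.of_nat (S (S m))))%Z with (Z.of_nat m) by lia. rewrite <- pow_powerRZ.
    apply Rle_pow; auto. lia.
Qed.

Lemma Cmod_prim k rho : (1 <= k)%nat -> primitive_root k rho -> Complex.Cmod rho = 1.
Proof.
  intros Hk [H _]. rewrite Cpow_E in H. apply (f_equal Complex.Cmod) in H.
  rewrite Cmod_pow in H. change C1 with (Complex.RtoC 1) in H. rewrite Cmod_R, Rabs_R1 in H.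
  apply (pow_eq1 _ k); auto. apply Cmod_ge_0.
Qed.

Theorem proposition4p3 (k L : nat) (delta Cb : R) :
  (1 <= k)%nat -> (1 <= L)%nat -> 0 < delta -> 0 < Cb ->
  exists M : R,
    forall (rho : Cplx) (a N : nat) (z : Cplx),
      primitive_root k rho -> (a <= k - 1)%nat -> (1 <= N)%nat ->
      Re z <= - delta -> Cmod z <= Cb ->
      Cmod (Csub (Copp (chi k rho a (Copp z) N)) (chi_expansion k rho a z N L))
        <= M / (INR N) ^ L.
Proof.
  intros Hk HL Hd HC.
  set (c0 := delta / Cb).
  assert (Hc0 : 0 < c0) by (unfold c0; apply Rdiv_lt_0_compat; auto).
  destruct (fin_bound2 (fun a l => bernpoly l (INR a / INR k)) k L) as [Bm [HBm HBb]].
  destruct (remainder L c0 Bm Hc0 HBm) as [K HK].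
  set (q := exp (- delta / 2)).
  assert (Hq : 0 <= q < 1).
  { unfold q. split. left; apply exp_pos. rewrite <- exp_0. apply exp_increasing. lra. }
  destruct (pow_geom_bound L delta Hd) as [A [HA HAb]].
  exists (Rabs K * (INR k * Cb) ^ L * A / (1 - q)).
  intros rho a N z Hprim Ha HN Hz Hzb.
  change (Re z) with (fst z) in Hz. change (Cmod z) with (Complex.Cmod z) in Hzb.
  assert (HNR : 0 < INR N) by (apply lt_0_INR; lia).
  assert (HkR : 0 < INR k) by (apply lt_0_INR; lia).
  assert (Hz0 : z <> Complex.RtoC 0). { intro H. rewrite H in Hz. simpl in Hz. lra. }
  assert (Hrho : Complex.Cmod rho = 1) by (apply (Cmod_prim k); auto).
  assert (Hrho0 : rho <> Complex.RtoC 0). { intro H. rewrite H, Cmod_R, Rabs_R0 in Hrho. lra. }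
  set (uu := Cmult (Complex.Cpow (Complex.Cinv rho) a) (Cexp z)).
  assert (Hu : Complex.Cmod uu <= exp (- delta)).
  { unfold uu. rewrite Complex.Cmod_mult, Cmod_pow, Cmod_inv, Hrho, Rinv_1, pow1, Rmult_1_l by auto.
    rewrite Cmod_Cexp. apply exp_le. lra. }
  set (lam := INR a / INR k).
  assert (Hlam : 0 <= lam <= 1).
  { unfold lam. split. apply Rmult_le_pos. apply pos_INR. left; apply Rinv_0_lt_compat; auto.
    apply (Rmult_le_reg_r (INR k)); auto. unfold Rdiv. rewrite Rmult_assoc, Rinv_l by lra.
    rewrite Rmult_1_r, Rmult_1_l. apply le_INR. lia. }
  assert (HBl : forall l, (l <= L)%nat -> Rabs (bernpoly l lam) <= Bm).
  { intros l Hl. apply (HBb a l); auto. lia. }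
  set (W := Rabs K * (INR k * Cb) ^ L / INR N ^ L).
  assert (HW : 0 <= W).
  { unfold W. apply Rmult_le_pos. apply Rmult_le_pos. apply Rabs_pos. apply pow_le. nra.
    left; apply Rinv_0_lt_compat, pow_lt; auto. }
  assert (HDt : forall i, Complex.Cmod (Dt k N L a rho z i) <= W * A * q ^ S i).
  { intros i. set (r := INR (S i)). assert (Hr : 1 <= r) by (unfold r; rewrite S_INR; pose proof (pos_INR i); lra).
    set (X := xrz k N z r).
    assert (HXm : Complex.Cmod X = INR k * r / INR N * Complex.Cmod z).
    { unfold X, xrz. rewrite Complex.Cmod_mult, Cmod_R, Cmod_opp. rewrite Rabs_pos_eq. reflexivity.
      apply Rmult_le_pos. nra. left; apply Rinv_0_lt_compat; auto. }
    assert (HXf : fst X = INR k * r / INR N * (- fst z)).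
    { unfold X, xrz. simpl. ring. }
    assert (Hcr : 0 < INR k * r / INR N) by (apply Rdiv_lt_0_compat; nra).
    assert (HX1 : 0 < fst X) by (rewrite HXf; nra).
    assert (HX2 : c0 * Complex.Cmod X <= fst X).
    { rewrite HXm, HXf. unfold c0.
      replace (delta / Cb * (INR k * r / INR N * Complex.Cmod z)) with ((INR k * r / INR N) * (delta * (Complex.Cmod z / Cb))) by (field; lra).
      apply Rmult_le_compat_l. lra.
      assert (Complex.Cmod z / Cb <= 1). { apply (Rmult_le_reg_r Cb); auto. unfold Rdiv. rewrite Rmult_assoc, Rinv_l by lra. lra. }
      assert (0 <= Complex.Cmod z / Cb) by (apply Rdiv_le_0_compat; auto using Cmod_ge_0).
      nra. }
    pose proof (HK lam X Hlam HBl HX1 HX2) as HR.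
    assert (HXL : Complex.Cmod X ^ L <= (INR k * Cb) ^ L / INR N ^ L * r ^ L).
    { rewrite HXm. replace ((INR k * Cb) ^ L / INR N ^ L * r ^ L) with ((INR k * r / INR N * Cb) ^ L).
      2:{ rewrite !Rpow_mult_distr. unfold Rdiv. rewrite !Rpow_mult_distr, pow_inv. ring. }
      apply pow_incr. split. apply Rmult_le_pos. lra. apply Cmod_ge_0.
      apply Rmult_le_compat_l; lra. }
    unfold Dt. fold lam. fold r. fold X.
    rewrite !Complex.Cmod_mult, Cmod_pow, Cmod_R.
    rewrite Rabs_pos_eq by (left; apply Rinv_0_lt_compat; lra).
    assert (Hir : / r <= 1). { rewrite <- Rinv_1. apply Rinv_le_contravar; lra. }
    assert (Hir0 : 0 < / r) by (apply Rinv_0_lt_compat; lra).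
    assert (HuS : Complex.Cmod uu ^ S i <= exp (- delta) ^ S i).
    { apply pow_incr. split; auto using Cmod_ge_0. }
    fold uu.
    set (E := Complex.Cmod (Cminus (Qf lam X) (Sx L lam X))) in *.
    assert (HE0 : 0 <= E) by apply Cmod_ge_0.
    assert (HE : E <= Rabs K * ((INR k * Cb) ^ L / INR N ^ L * r ^ L)).
    { eapply Rle_trans; [exact HR|]. apply Rle_trans with (Rabs K * Complex.Cmod X ^ L).
      apply Rmult_le_compat_r. apply pow_le, Cmod_ge_0. apply Rle_abs.
      apply Rmult_le_compat_l. apply Rabs_pos. exact HXL. }
    pose proof (HAb (S i)) as HAi. fold r in HAi. fold q in HAi.
    assert (Hp0 : 0 <= Complex.Cmod uu ^ S i) by (apply pow_le, Cmod_ge_0).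
    apply Rle_trans with (exp (- delta) ^ S i * 1 * (Rabs K * ((INR k * Cb) ^ L / INR N ^ L * r ^ L))).
    { apply Rmult_le_compat. apply Rmult_le_pos; lra. exact HE0. apply Rmult_le_compat; lra. exact HE. }
    replace (exp (- delta) ^ S i * 1 * (Rabs K * ((INR k * Cb) ^ L / INR N ^ L * r ^ L))) with
      (W * (r ^ L * exp (- delta) ^ S i)) by (unfold W; field; apply pow_nonzero; lra).
    rewrite Rmult_assoc. apply Rmult_le_compat_l; auto. }
  assert (HDs : is_series (Dt k N L a rho z) (Csum (Dt k N L a rho z))).
  { apply ex_Csum. apply (@ex_series_le C_AbsRing C_CompleteNormedModule (Dt k N L a rho z) (fun i => W * A * q ^ S i)).
    intros n. change (norm (Dt k N L a rho z n)) with (Complex.Cmod (Dt k N L a rho z n)). apply HDt.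
    apply geom_ex; auto. }
  assert (HLs : forall l, (l <= L)%nat -> is_series (gl l uu) (Csum (gl l uu))).
  { intros l Hl. apply ex_Csum. apply (@ex_series_le C_AbsRing C_CompleteNormedModule (gl l uu) (fun i => A * q ^ S i)).
    2:{ apply geom_ex; auto. }
    intros i. change (norm (gl l uu i)) with (Complex.Cmod (gl l uu i)).
    unfold gl. rewrite Complex.Cmod_mult, Cmod_pow, Cmod_R.
    assert (Hr : 1 <= INR (S i)) by (rewrite S_INR; pose proof (pos_INR i); lra).
    pose proof (PRZ_bound (INR (S i)) l L Hr Hl) as HP.
    assert (HuS : Complex.Cmod uu ^ S i <= exp (- delta) ^ S i).
    { apply pow_incr. split; auto using Cmod_ge_0. }
    pose proof (HAb (S i)) as HAi. fold q in HAi.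
    eapply Rle_trans; [|exact HAi]. rewrite Rmult_comm.
    apply Rmult_le_compat; auto. apply Rabs_pos. apply pow_le, Cmod_ge_0. }
  set (Ex := sum_n (fun l => Cmult (coefl k a z N l) (Csum (gl l uu))) L).
  assert (HEs : is_series (fun i => sum_n (fun l => Cmult (coefl k a z N l) (gl l uu i)) L) Ex).
  { apply (is_series_sum_n (fun l i => Cmult (coefl k a z N l) (gl l uu i))). intros; apply is_series_Cmult_l; auto. }
  assert (Hchi : is_series (chiT k rho a (Complex.Copp z) N) (Cminus (Csum (Dt k N L a rho z)) Ex)).
  { apply is_series_ext with (fun i => Cminus (Dt k N L a rho z i) (sum_n (fun l => Cmult (coefl k a z N l) (gl l uu i)) L)).
    intros i. symmetry. apply decomp; auto.
    apply is_series_Cminus; auto. }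
  rewrite chi_unfold, chi_expansion_unfold. fold uu. fold Ex.
  change (Copp z) with (Complex.Copp z).
  rewrite (Csum_is _ _ Hchi).
  set (S0 := Csum (Dt k N L a rho z)).
  change (Complex.Cmod (Cminus (Complex.Copp (Cminus S0 Ex)) Ex) <= Rabs K * (INR k * Cb) ^ L * A / (1 - q) / INR N ^ L).
  replace (Cminus (Complex.Copp (Cminus S0 Ex)) Ex) with (Complex.Copp S0) by ring.
  rewrite Cmod_opp.
  eapply Rle_trans. apply (is_series_bound (Dt k N L a rho z) S0 (fun i => W * A * q ^ S i) (W * A / (1 - q))); auto.
  intros n. apply geom_sum_S; auto. apply Rmult_le_pos; auto.
  right. unfold W. field. split. lra. apply pow_nonzero; lra.
Qed.
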